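(* Persistence equivalence and graph equivalence of discrete Morse functions on graphs are independent: there exist a finite tree $T$ with $n$ simplices and discrete Morse functions on $T$ that are graph equivalent but not persistence equivalent, and discrete Morse functions on $T$ that are persistence equivalent but not graph equivalent.
   Context: For a finite simple graph $G$, its simplices are its vertices and edges; write $v<e$ if vertex $v$ is an endpoint of edge $e$; $n$ is the total number of simplices. A discrete Morse function is a function $f$ from the simplices to $[0,n]$ such that: (i) $v<e$ implies $f(v)\le f(e)$; (ii) $\min f=0$; (iii) every value is attained by at most two simplices, and if $f(\sigma)=f(\tau)$ with $\sigma\neq\tau$ then one is an endpoint of the other; (iv) if a value $f(\sigma)$ is attained only by $\sigma$, then $f(\sigma)\in\mathbb{N}$; such $\sigma$ is critical and $f(\sigma)$ a critical value. With critical values $c_0<\dots<c_{m-1}$, the level subcomplexes $G_{c_i}=\{\sigma:f(\sigma)\le c_i\}$ form a filtration whose persistent homology (over a field) gives the persistence diagram $D_f$; $f,g$ are persistence equivalent if $D_f=D_g$. If $f,g$ have critical values $a_0<\dots<a_{m-1}$ and $c_0<\dots<c_{m-1}$ respectively (same number $m$), they are graph equivalent if $G_{a_i}\cong G_{c_i}$ as graphs for every $0\le i\le m-1$ (level subcomplexes taken for $f$ and $g$ respectively). *)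

(* Defs.v *)
From HB Require Import structures.
From mathcomp Require Import all_boot all_order all_algebra.
Set Implicit Arguments. Unset Strict Implicit. Unset Printing Implicit Defensive.
Import Order.TTheory GRing.Theory Num.Theory.
Local Open Scope ring_scope.

(* Simplices are encoded in V + {set V}:
   inl v is the vertex v, inr A is the edge A (when is_edge e A). *)

Section Graphs.
Variables (V : finType) (e : rel V).

Definition simple_graph : Prop := irreflexive e /\ symmetric e.

Definition is_edge (A : {set V}) : bool :=
  [exists x, exists y, e x y && (A == [set x; y])].

Definition edges : {set {set V}} := [set A | is_edge A].

Definition is_simplex (s : V + {set V}) : bool :=
  match s with inl _ => true | inr A => is_edge A end.

Definition face (s t : V + {set V}) : bool :=
  match s, t with inl v, inr A => v \in A | _, _ => false end.

Definition n_simplices : nat := (#|V| + #|edges|)%N.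

Definition connected_graph : Prop := forall x y, connect e x y.

Definition acyclic_graph : Prop :=
  forall s : seq V, (3 <= size s)%N -> ~~ (cycle e s && uniq s).

Definition is_tree : Prop :=
  [/\ simple_graph, (0 < #|V|)%N, connected_graph & acyclic_graph].

Variable R : realFieldType.
Implicit Types f g : V + {set V} -> R.

Definition critical f (s : V + {set V}) : bool :=
  is_simplex s && [forall t, (is_simplex t && (f t == f s)) ==> (t == s)].

Definition discrete_morse f : Prop :=
  (forall v A, is_edge A -> v \in A -> f (inl v) <= f (inr A)) /\
  (forall s, is_simplex s -> 0 <= f s <= (n_simplices)%:R) /\
  (exists2 s, is_simplex s & f s = 0) /\
  (forall s t u, is_simplex s -> is_simplex t -> is_simplex u ->
     s != t -> t != u -> s != u -> ~ (f s = f t /\ f t = f u)) /\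
  (forall s t, is_simplex s -> is_simplex t -> s != t -> f s = f t ->
     face s t || face t s) /\
  (forall s, critical f s -> exists k : nat, f s = k%:R).

Definition crit_vals f : seq R :=
  sort <=%R (undup [seq f s | s <- enum [pred s | critical f s]]).

Definition level_V f (c : R) : {set V} := [set v | f (inl v) <= c].
Definition level_E f (c : R) : {set {set V}} :=
  [set A | is_edge A && (f (inr A) <= c)].

Definition subgraph_iso (VS1 : {set V}) (ES1 : {set {set V}})
                        (VS2 : {set V}) (ES2 : {set {set V}}) : Prop :=
  exists h : V -> V,
    [/\ {in VS1 &, injective h}, h @: VS1 = VS2 &
        (fun A : {set V} => h @: A) @: ES1 = ES2].

Definition graph_equiv f g : Prop :=
  size (crit_vals f) = size (crit_vals g) /\
  forall i, (i < size (crit_vals f))%N ->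
    subgraph_iso (level_V f (nth 0 (crit_vals f) i))
                 (level_E f (nth 0 (crit_vals f) i))
                 (level_V g (nth 0 (crit_vals g) i))
                 (level_E g (nth 0 (crit_vals g) i)).

Variable F : fieldType.

Definition C0 := {ffun V -> F^o}.
Definition C1 := {ffun {set V} -> F^o}.

Definition chi0 (v : V) : C0 := [ffun x => (x == v)%:R].
Definition chi1 (A : {set V}) : C1 := [ffun B => (B == A)%:R].

(* boundary of the edge A = {x,y}, oriented by enum_rank: y - x when x < y *)
Definition bd (A : {set V}) : C0 :=
  [ffun v => if v \in A then
               (if [exists w in A, (enum_rank w < enum_rank v)%N] then 1 else -1)
             else 0].

Definition boundary (phi : C1) : C0 := \sum_(A in edges) phi A *: bd A.

Definition chains0 (VS : {set V}) : {vspace C0} := <<[seq chi0 v | v <- enum VS]>>%VS.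
Definition chains1 (ES : {set {set V}}) : {vspace C1} := <<[seq chi1 A | A <- enum ES]>>%VS.
Definition cycles0 VS : {vspace C0} := chains0 VS.
Definition bounds0 (ES : {set {set V}}) : {vspace C0} := <<[seq bd A | A <- enum ES]>>%VS.
Definition cycles1 ES : {vspace C1} := (chains1 ES :&: lker (linfun boundary))%VS.
Definition bounds1 (ES : {set {set V}}) : {vspace C1} := 0%VS.

Definition pbetti (p : nat) (K L : {set V} * {set {set V}}) : nat :=
  match p with
  | 0 => (\dim (cycles0 K.1) - \dim (cycles0 K.1 :&: bounds0 L.2))%N
  | 1 => (\dim (cycles1 K.2) - \dim (cycles1 K.2 :&: bounds1 L.2))%N
  | _ => 0%N
  end.

(* filtration of f, shifted: filt f 0 = empty complex, filt f (i+1) = G_{c_i} *)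
Definition filt f (k : nat) : {set V} * {set {set V}} :=
  if k is k'.+1 then (level_V f (nth 0 (crit_vals f) k'),
                      level_E f (nth 0 (crit_vals f) k'))
  else (set0, set0).

(* beta_p^{i,j} with i,j in {-1,0,...,m-1} (index -1 = empty complex) *)
Definition pb f p (i j : nat) : int := (pbetti p (filt f i) (filt f j))%:Z.

Definition mult f p (i j : nat) : int :=
  pb f p i.+1 j - pb f p i.+1 j.+1 - pb f p i j + pb f p i j.+1.
Definition mult_inf f p (i : nat) : int :=
  let m := size (crit_vals f) in pb f p i.+1 m - pb f p i m.

(* persistence diagram D_f in dimension p, as a multiset of points
   (b, d) with d = None standing for +infinity *)
Definition pdiagram f (p : nat) (b : R) (d : option R) : int :=
  let cv := crit_vals f in let m := size cv in
  (\sum_(i < m) \sum_(j < m | (i < j)%N)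
      (if (b == nth 0 cv i) && (d == Some (nth 0 cv j)) then mult f p i j else 0))
  + \sum_(i < m) (if (b == nth 0 cv i) && (d == None) then mult_inf f p i else 0).

Definition persistence_equiv f g : Prop :=
  forall p b d, pdiagram f p b d = pdiagram g p b d.

End Graphs.

(* Main.v *)
Require Import Defs.
From HB Require Import structures.
From mathcomp Require Import all_boot all_order all_algebra zify.

Module Helpers.
Set Implicit Arguments. Unset Strict Implicit. Unset Printing Implicit Defensive.
Import Order.TTheory GRing.Theory Num.Theory.

Definition o0 : 'I_3 := @Ordinal 3 0 isT.
Definition o1 : 'I_3 := @Ordinal 3 1 isT.
Definition o2 : 'I_3 := @Ordinal 3 2 isT.
Definition pe : rel 'I_3 := fun x y => (x.+1 == y :> nat) || (y.+1 == x :> nat).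
Definition E01 : {set 'I_3} := [set o0; o1].
Definition E12 : {set 'I_3} := [set o1; o2].

Lemma ord3P (x : 'I_3) : x = o0 \/ x = o1 \/ x = o2.
Proof.
case: x => [[|[|[|m]]] Hm].
- by left; apply: val_inj.
- by right; left; apply: val_inj.
- by right; right; apply: val_inj.
- by [].
Qed.

Lemma E01_neq_E12 : E01 != E12.
Proof. apply/eqP => /setP /(_ o0); by rewrite !inE. Qed.

Lemma edge_cases A : is_edge pe A -> A = E01 \/ A = E12.
Proof.
move/existsP=> [x /existsP [y /andP [exy /eqP ->]]].
case: (ord3P x) exy => [->|[->|->]]; case: (ord3P y) => [->|[->|->]] //= _.
- by left.
- by left; rewrite /E01 setUC.
- by right.
- by right; rewrite /E12 setUC.
Qed.

Lemma edge_E01 : is_edge pe E01.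
Proof. by apply/existsP; exists o0; apply/existsP; exists o1; rewrite eqxx. Qed.
Lemma edge_E12 : is_edge pe E12.
Proof. by apply/existsP; exists o1; apply/existsP; exists o2; rewrite eqxx. Qed.

Lemma tree_pe : is_tree pe.
Proof.
split.
- split; first by move=> x; case: (ord3P x) => [->|[->|->]].
  by move=> x y; rewrite /pe orbC.
- by rewrite card_ord.
- have c01 : connect pe o0 o1 by apply: connect1.
  have c12 : connect pe o1 o2 by apply: connect1.
  have c10 : connect pe o1 o0 by apply: connect1.
  have c21 : connect pe o2 o1 by apply: connect1.
  move=> x y; case: (ord3P x) => [->|[->|->]]; case: (ord3P y) => [->|[->|->]] //;
   first [exact: connect0 | assumption | exact: connect_trans c01 c12 | exact: connect_trans c21 c10].
- move=> s Hs; apply/negP => /andP [Hc Hu].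
  have Hsz : size s <= 3 
    by rewrite -(card_uniqP Hu); apply: leq_trans (max_card _) _; rewrite card_ord.
  case: s Hs Hc Hu Hsz => [|x [|y [|z [|w s]]]] //= _.
  case: (ord3P x) => [->|[->|->]]; case: (ord3P y) => [->|[->|->]]; case: (ord3P z) => [->|[->|->]] //.
Qed.

Local Open Scope ring_scope.

Definition S3 := ('I_3 + {set 'I_3})%type.

Lemma simplex5 (s : S3) : is_simplex pe s ->
  s = inl o0 \/ s = inl o1 \/ s = inl o2 \/ s = inr E01 \/ s = inr E12.
Proof.
case: s => [v|A] /=.
- by case: (ord3P v) => [->|[->|->]]; auto.
- by case/edge_cases => ->; auto.
Qed.

Lemma simp_o0 : is_simplex pe (inl o0). Proof. by []. Qed.

Definition hh (a b c d e : nat) (s : S3) : nat :=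
  match s with
  | inl v => match val v with 0 => a | 1 => b | _ => c end
  | inr A => if o0 \in A then d else e
  end.

Lemma hh_E01 a b c d e : hh a b c d e (inr E01) = d.
Proof. by rewrite /= !inE eqxx. Qed.
Lemma hh_E12 a b c d e : hh a b c d e (inr E12) = e.
Proof. by rewrite /= !inE. Qed.

Section F.
Variable R : realFieldType.
Variables a b c d e : nat.
Definition fv (s : S3) : R := (hh a b c d e s)%:R / 2%:R.
Let h := hh a b c d e.

Lemma two_neq0 : (2%:R : R) != 0. Proof. by rewrite pnatr_eq0. Qed.

Lemma fv_eq s t : (fv s == fv t) = (h s == h t).
Proof.
rewrite /fv -(eqr_nat R); apply/eqP/eqP => [H|->] //.
by have := congr1 (fun x => x * 2%:R) H; rewrite !mulfVK ?two_neq0.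
Qed.

Lemma fv_le s t : (fv s <= fv t) = (h s <= h t)%N.
Proof. by rewrite /fv ler_pM2r ?invr_gt0 ?ltr0n // ler_nat. Qed.

Lemma half_double m : (m.*2)%:R / 2%:R = m%:R :> R.
Proof. by rewrite -muln2 natrM mulfK ?two_neq0. Qed.

End F.

Section F2.
Variable R : realFieldType.

Lemma fv_le_nat a b c d e s m :
  (fv R a b c d e s <= m%:R) = (hh a b c d e s <= m.*2)%N.
Proof.
by rewrite -(half_double R m) /fv ler_pM2r ?invr_gt0 ?ltr0n // ler_nat.
Qed.

Lemma fv_ge0 a b c d e s : 0 <= fv R a b c d e s.
Proof. by rewrite /fv divr_ge0 ?ler0n. Qed.

Lemma n_ge3 : (3 <= n_simplices pe)%N.
Proof. by rewrite /n_simplices card_ord leq_addr. Qed.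

Lemma range_fv a b c d e : (a <= 6)%N -> (b <= 6)%N -> (c <= 6)%N ->
  (d <= 6)%N -> (e <= 6)%N ->
  forall s, 0 <= fv R a b c d e s <= (n_simplices pe)%:R.
Proof.
move=> ha hb hc hd he s; rewrite fv_ge0 /=.
apply: le_trans (_ : fv R a b c d e s <= 3%:R) _; last by rewrite ler_nat n_ge3.
rewrite fv_le_nat; case: s => [v|A] /=; last by case: ifP.
by case: v => [[|[|m]] ?].
Qed.

Lemma crit_iff (f : S3 -> R) s : critical pe f s <->
  is_simplex pe s /\ (forall t, is_simplex pe t -> f t = f s -> t = s).
Proof.
rewrite /critical; split.
- case/andP=> Hs /forallP H; split => // t Ht Hf.
  by have /implyP := H t; rewrite Ht Hf eqxx => /(_ isT) /eqP.
- case=> Hs H; rewrite Hs; apply/forallP => t; apply/implyP => /andP [Ht /eqP Hf].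
  by rewrite (H t Ht Hf).
Qed.

Lemma crit_valsE (f : S3 -> R) (cs : seq R) :
  (forall x, x \in cs <-> exists s, critical pe f s /\ f s = x) ->
  uniq cs -> sorted <=%R cs -> crit_vals pe f = cs.
Proof.
move=> Hm Hu Hs; rewrite /crit_vals.
rewrite -(sorted_sort le_trans Hs).
apply/perm_sortP; [exact: le_total | exact: le_trans | exact: le_anti |].
apply: uniq_perm; [exact: undup_uniq | exact: Hu |].
move=> x; rewrite mem_undup; apply/mapP/idP.
- by case=> s; rewrite mem_enum => Hc ->; apply/Hm; exists s.
- by move/Hm => [s [Hc <-]]; exists s => //; rewrite mem_enum.
Qed.


Lemma fv_even a b c d e s : ~~ odd (hh a b c d e s) ->
  exists k : nat, fv R a b c d e s = k%:R.
Proof.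
move=> Hev; exists (hh a b c d e s)./2; rewrite /fv.
by rewrite -{1}(odd_double_half (hh a b c d e s)) (negbTE Hev) add0n half_double.
Qed.

Lemma fv_val a b c d e s k : hh a b c d e s = k.*2 -> fv R a b c d e s = k%:R.
Proof. by move=> H; rewrite /fv H half_double. Qed.

Lemma not_crit (f : S3 -> R) s t : is_simplex pe s -> is_simplex pe t ->
  f t = f s -> t != s -> ~ critical pe f s.
Proof. by move=> Hs Ht Hf /eqP Hn /crit_iff [_ H]; apply: Hn; apply: H. Qed.

End F2.

Local Open Scope ring_scope.

Ltac case5 H := case/simplex5: H => [->|[->|[->|[->|->]]]].
Ltac hsimp := rewrite ?fv_eq ?fv_le /= ?hh_E01 ?hh_E12.


Ltac critS f :=
  apply/crit_iff; split; first (by rewrite /= ?edge_E12 ?edge_E01); move=> t;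
  case/simplex5 => [->|[->|[->|[->|->]]]];
  move/eqP; rewrite /f fv_eq ?hh_E01 ?hh_E12 //.

Section M.
Variable R : realFieldType.
Definition fA := fv R 0 1 2 1 4.
Definition gB := fv R 0 1 2 1 6.
Definition gC := fv R 0 2 6 4 6.

Lemma morse_fA : discrete_morse pe fA.
Proof.
split; [|split; [|split; [|split; [|split]]]];
[ move=> v A /edge_cases [->|->]; case: (ord3P v) => [->|[->|->]];
    rewrite !inE //= => _; rewrite /fA fv_le ?hh_E01 ?hh_E12 //
| by move=> s _; apply: range_fv
| by exists (inl o0) => //; rewrite /fA /fv /= mul0r
| move=> s t u Hs Ht Hu; case5 Hs; case5 Ht; case5 Hu; rewrite ?eqxx //=;
    move=> _ _ _ [/eqP H1 /eqP H2]; move: H1 H2; rewrite /fA !fv_eq ?hh_E01 ?hh_E12 //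
| move=> s t Hs Ht; case5 Hs; case5 Ht; rewrite ?eqxx // => _ /eqP;
    rewrite /fA fv_eq ?hh_E01 ?hh_E12 //= => _; rewrite !inE ?eqxx ?orbT //
| move=> s Hc; have [Hs _] := (crit_iff _ _).1 Hc; move: Hc; case5 Hs => Hc;
    try (apply: fv_even; rewrite ?hh_E01 ?hh_E12 //) ].
  + case: (not_crit (t := inr E01) _ _ _ _ Hc) => //; first exact: edge_E01.
    by apply/eqP; rewrite fv_eq hh_E01.
  + case: (not_crit (t := inl o1) _ _ _ _ Hc) => //; first exact: edge_E01.
    by apply/eqP; rewrite fv_eq hh_E01.
Qed.

Lemma morse_gB : discrete_morse pe gB.
Proof.
split; [|split; [|split; [|split; [|split]]]];
[ move=> v A /edge_cases [->|->]; case: (ord3P v) => [->|[->|->]];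
    rewrite !inE //= => _; rewrite /gB fv_le ?hh_E01 ?hh_E12 //
| by move=> s _; apply: range_fv
| by exists (inl o0) => //; rewrite /gB /fv /= mul0r
| move=> s t u Hs Ht Hu; case5 Hs; case5 Ht; case5 Hu; rewrite ?eqxx //=;
    move=> _ _ _ [/eqP H1 /eqP H2]; move: H1 H2; rewrite /gB !fv_eq ?hh_E01 ?hh_E12 //
| move=> s t Hs Ht; case5 Hs; case5 Ht; rewrite ?eqxx // => _ /eqP;
    rewrite /gB fv_eq ?hh_E01 ?hh_E12 //= => _; rewrite !inE ?eqxx ?orbT //
| move=> s Hc; have [Hs _] := (crit_iff _ _).1 Hc; move: Hc; case5 Hs => Hc;
    try (apply: fv_even; rewrite ?hh_E01 ?hh_E12 //) ].
  + case: (not_crit (t := inr E01) _ _ _ _ Hc) => //; first exact: edge_E01.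
    by apply/eqP; rewrite fv_eq hh_E01.
  + case: (not_crit (t := inl o1) _ _ _ _ Hc) => //; first exact: edge_E01.
    by apply/eqP; rewrite fv_eq hh_E01.
Qed.

Lemma morse_gC : discrete_morse pe gC.
Proof.
split; [|split; [|split; [|split; [|split]]]];
[ move=> v A /edge_cases [->|->]; case: (ord3P v) => [->|[->|->]];
    rewrite !inE //= => _; rewrite /gC fv_le ?hh_E01 ?hh_E12 //
| by move=> s _; apply: range_fv
| by exists (inl o0) => //; rewrite /gC /fv /= mul0r
| move=> s t u Hs Ht Hu; case5 Hs; case5 Ht; case5 Hu; rewrite ?eqxx //=;
    move=> _ _ _ [/eqP H1 /eqP H2]; move: H1 H2; rewrite /gC !fv_eq ?hh_E01 ?hh_E12 //
| move=> s t Hs Ht; case5 Hs; case5 Ht; rewrite ?eqxx // => _ /eqP;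
    rewrite /gC fv_eq ?hh_E01 ?hh_E12 //= => _; rewrite !inE ?eqxx ?orbT //
| move=> s Hc; have [Hs _] := (crit_iff _ _).1 Hc; move: Hc; case5 Hs => Hc;
    try (apply: fv_even; rewrite ?hh_E01 ?hh_E12 //) ].
Qed.

Lemma crit_fA : crit_vals pe fA = [:: 0%:R; 1%:R; 2%:R].
Proof.
apply: crit_valsE; last first.
- by rewrite /= !ler_nat.
- by rewrite /= !inE !eqr_nat.
move=> x; split.
- rewrite !inE => /or3P [] /eqP ->.
  + by exists (inl o0); split; [critS fA | apply: fv_val].
  + by exists (inl o2); split; [critS fA | apply: fv_val].
  + by exists (inr E12); split; [critS fA | apply: fv_val; rewrite hh_E12].
- case=> s [Hc <-]; have [Hs _] := (crit_iff _ _).1 Hc; move: Hc; case5 Hs => Hc.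
  + by rewrite /fA (@fv_val R _ _ _ _ _ _ 0) // !inE eqxx.
  + case: (not_crit (t := inr E01) _ _ _ _ Hc) => //; first exact: edge_E01.
    by apply/eqP; rewrite fv_eq hh_E01.
  + by rewrite /fA (@fv_val R _ _ _ _ _ _ 1) // !inE eqxx ?orbT.
  + case: (not_crit (t := inl o1) _ _ _ _ Hc) => //; first exact: edge_E01.
    by apply/eqP; rewrite fv_eq hh_E01.
  + by rewrite /fA (@fv_val R _ _ _ _ _ _ 2) ?hh_E12 // !inE eqxx ?orbT.
Qed.

Lemma crit_gB : crit_vals pe gB = [:: 0%:R; 1%:R; 3%:R].
Proof.
apply: crit_valsE; last first.
- by rewrite /= !ler_nat.
- by rewrite /= !inE !eqr_nat.
move=> x; split.
- rewrite !inE => /or3P [] /eqP ->.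
  + by exists (inl o0); split; [critS gB | apply: fv_val].
  + by exists (inl o2); split; [critS gB | apply: fv_val].
  + by exists (inr E12); split; [critS gB | apply: fv_val; rewrite hh_E12].
- case=> s [Hc <-]; have [Hs _] := (crit_iff _ _).1 Hc; move: Hc; case5 Hs => Hc.
  + by rewrite /gB (@fv_val R _ _ _ _ _ _ 0) // !inE eqxx.
  + case: (not_crit (t := inr E01) _ _ _ _ Hc) => //; first exact: edge_E01.
    by apply/eqP; rewrite fv_eq hh_E01.
  + by rewrite /gB (@fv_val R _ _ _ _ _ _ 1) // !inE eqxx ?orbT.
  + case: (not_crit (t := inl o1) _ _ _ _ Hc) => //; first exact: edge_E01.
    by apply/eqP; rewrite fv_eq hh_E01.
  + by rewrite /gB (@fv_val R _ _ _ _ _ _ 3) ?hh_E12 // !inE eqxx ?orbT.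
Qed.

Lemma crit_gC : crit_vals pe gC = [:: 0%:R; 1%:R; 2%:R].
Proof.
apply: crit_valsE; last first.
- by rewrite /= !ler_nat.
- by rewrite /= !inE !eqr_nat.
move=> x; split.
- rewrite !inE => /or3P [] /eqP ->.
  + by exists (inl o0); split; [critS gC | apply: fv_val].
  + by exists (inl o1); split; [critS gC | apply: fv_val].
  + by exists (inr E01); split; [critS gC | apply: fv_val; rewrite hh_E01].
- case=> s [Hc <-]; have [Hs _] := (crit_iff _ _).1 Hc; move: Hc; case5 Hs => Hc.
  + by rewrite /gC (@fv_val R _ _ _ _ _ _ 0) // !inE eqxx.
  + by rewrite /gC (@fv_val R _ _ _ _ _ _ 1) // !inE eqxx ?orbT.
  + case: (not_crit (t := inr E12) _ _ _ _ Hc) => //; first exact: edge_E12.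
    by apply/eqP; rewrite fv_eq hh_E12.
  + by rewrite /gC (@fv_val R _ _ _ _ _ _ 2) ?hh_E01 // !inE eqxx ?orbT.
  + case: (not_crit (t := inl o2) _ _ _ _ Hc) => //; first exact: edge_E12.
    by apply/eqP; rewrite fv_eq hh_E12.
Qed.
End M.

Local Open Scope ring_scope.

Section LA.
Variable F : fieldType.

Lemma span_phi (vT : vectType F) (phi : vT -> F) :
  (forall x y, phi (x + y) = phi x + phi y) ->
  (forall k x, phi (k *: x) = k * phi x) ->
  forall X : seq vT, (forall x, x \in X -> phi x = 0) ->
  forall y, y \in <<X>>%VS -> phi y = 0.
Proof.
move=> phiD phiZ X HX y Hy.
have phi0 : phi 0 = 0 by rewrite -(scale0r (0 : vT)) phiZ mul0r.
rewrite (@coord_span _ _ _ (in_tuple X) _ Hy) (big_morph phi phiD phi0) big1 // => i _.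
by rewrite phiZ HX ?mulr0 // mem_nth.
Qed.

Variable V : finType.

Lemma ev_add (w : V) (x y : C0 V F) : (x + y) w = x w + y w.
Proof. by rewrite ffunE. Qed.
Lemma ev_scale (w : V) k (x : C0 V F) : (k *: x) w = k * x w.
Proof. by rewrite ffunE. Qed.
Lemma ev1_add (w : {set V}) (x y : C1 V F) : (x + y) w = x w + y w.
Proof. by rewrite ffunE. Qed.
Lemma ev1_scale (w : {set V}) k (x : C1 V F) : (k *: x) w = k * x w.
Proof. by rewrite ffunE. Qed.

Lemma chi0E (v w : V) : chi0 F v w = if w == v then 1 else 0.
Proof. by rewrite ffunE; case: eqP. Qed.

Lemma chains0_supp (S : {set V}) (x : C0 V F) : x \in chains0 F S -> forall v, v \notin S -> x v = 0.
Proof.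
move=> Hx v Hv.
apply: (span_phi (phi := fun x : C0 V F => x v)) Hx.
- exact: ev_add.
- exact: ev_scale.
- move=> y /mapP [w Hw ->]; rewrite chi0E; case: eqP => // Evw.
  by move: Hw; rewrite mem_enum -Evw (negbTE Hv).
Qed.

Lemma expand0 (x : C0 V F) : x = \sum_v x v *: chi0 F v.
Proof.
apply/ffunP => w; rewrite sum_ffunE (bigD1 w) //= big1 => [|v Hv].
  by rewrite ev_scale chi0E eqxx mulr1 addr0.
by rewrite ev_scale chi0E eq_sym (negbTE Hv) mulr0.
Qed.

Lemma supp_chains0 (S : {set V}) (x : C0 V F) : (forall v, v \notin S -> x v = 0) -> x \in chains0 F S.
Proof.
move=> H; rewrite (expand0 x); apply: memv_suml => v _.
case: (boolP (v \in S)) => Hv.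
  by apply: memvZ; apply: memv_span; apply/mapP; exists v; rewrite ?mem_enum.
by rewrite H // scale0r mem0v.
Qed.

Lemma free_chi0 (s : seq V) : uniq s -> free (map (chi0 F) s).
Proof.
elim: s => [|v s IH] /=; first by rewrite nil_free.
case/andP => Hv Hu; rewrite free_cons IH // andbT.
apply/negP => Hin.
have H0 : chi0 F v v = 0.
  apply: (span_phi (phi := fun x : C0 V F => x v) (@ev_add v) (@ev_scale v) _ Hin).
  2: by move: H0; rewrite chi0E eqxx => /eqP; rewrite oner_eq0.
move=> y /mapP [w Hw ->]; rewrite chi0E; case: eqP => // Evw.
by move: Hw; rewrite -Evw (negbTE Hv).
Qed.

Lemma dim_free (vT : vectType F) (X : seq vT) : free X -> \dim <<X>> = size X.
Proof. by move/eqP. Qed.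

Lemma dim_chains0 (S : {set V}) : \dim (chains0 F S) = #|S|.
Proof. by rewrite /chains0 dim_free ?size_map -?cardE // free_chi0 ?enum_uniq. Qed.

End LA.

Section LA2.
Variable F : fieldType.
Variable V : finType.

Lemma bd_out (A : {set V}) v : v \notin A -> bd F A v = 0.
Proof. by move=> H; rewrite ffunE (negbTE H). Qed.

Lemma bd_in (A : {set V}) v : v \in A -> bd F A v != 0.
Proof.
move=> H; rewrite ffunE H; case: ifP => _; first by rewrite oner_eq0.
by rewrite oppr_eq0 oner_eq0.
Qed.

Lemma ex_rank (x y : V) :
  [exists w in [set x; y], (enum_rank w < enum_rank x)%N] = (enum_rank y < enum_rank x)%N.
Proof.
apply/existsP/idP => [[w /andP [Hw Hlt]] | H].
  by move: Hw Hlt; rewrite !inE => /orP [/eqP->|/eqP->] //; rewrite ltnn.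
by exists y; rewrite !inE eqxx orbT H.
Qed.

Lemma bd_sum (x y : V) : x != y -> \sum_v bd F [set x; y] v = 0.
Proof.
move=> Hxy; rewrite (bigD1 x) //= (bigD1 y) /=; last by rewrite eq_sym.
rewrite big1 => [|v /andP [Hvx Hvy]]; last by rewrite bd_out // !inE negb_or Hvx.
rewrite addr0 !ffunE !inE !eqxx orbT /=.
rewrite ex_rank setUC ex_rank.
case: (ltngtP (enum_rank y) (enum_rank x)) => H.
- by rewrite addrN.
- by rewrite addNr.
- by move/val_inj/enum_rank_inj: H => H; rewrite H eqxx in Hxy.
Qed.

Lemma sum_add (x y : C0 V F) : \sum_v (x + y) v = \sum_v x v + \sum_v y v.
Proof. by rewrite -big_split; apply: eq_bigr => v _; rewrite ev_add. Qed.
Lemma sum_scale k (x : C0 V F) : \sum_v (k *: x) v = k * \sum_v x v.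
Proof. by rewrite mulr_sumr; apply: eq_bigr => v _; rewrite ev_scale. Qed.

Definition pairs (ES : {set {set V}}) :=
  forall A, A \in ES -> exists x y, x != y /\ A = [set x; y].

Lemma bounds0_sum (ES : {set {set V}}) (y : C0 V F) : pairs ES -> y \in bounds0 F ES -> \sum_v y v = 0.
Proof.
move=> HP Hy.
apply: (span_phi (phi := fun x : C0 V F => \sum_v x v) sum_add sum_scale _ Hy).
move=> z /mapP [A HA ->]; rewrite mem_enum in HA.
by have [x [y' [Hn ->]]] := HP A HA; apply: bd_sum.
Qed.

Lemma cap_single (v0 : V) (ES : {set {set V}}) : pairs ES ->
  (chains0 F [set v0] :&: bounds0 F ES)%VS = 0%VS.
Proof.
move=> HP; apply/eqP; rewrite -subv0; apply/subvP => x; rewrite memv_cap memv0.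
case/andP => H1 H2; have Hs := bounds0_sum HP H2.
have Hsupp := chains0_supp H1.
have Hx0 : x v0 = 0.
  rewrite -Hs (bigD1 v0) //= big1 ?addr0 // => v Hv; apply: Hsupp; by rewrite inE.
apply/eqP/ffunP => v; rewrite ffunE; case: (eqVneq v v0) => [->|Hv] //.
by apply: Hsupp; rewrite inE.
Qed.

Lemma bounds0_sub (S : {set V}) (ES : {set {set V}}) : (forall A, A \in ES -> A \subset S) ->
  (bounds0 F ES <= chains0 F S)%VS.
Proof.
move=> H; apply/span_subvP => z /mapP [A HA ->]; rewrite mem_enum in HA.
apply: supp_chains0 => v Hv; apply: bd_out; apply: contra Hv.
exact: (subsetP (H A HA)).
Qed.

End LA2.

Local Open Scope ring_scope.

Section C.
Variable F : fieldType.

Lemma pairs_edges (ES : {set {set 'I_3}}) : (forall A, A \in ES -> is_edge pe A) -> pairs ES.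
Proof.
move=> H A /H /edge_cases [->|->].
- by exists o0, o1.
- by exists o1, o2.
Qed.

Lemma bd_neq0 (A : {set 'I_3}) v : v \in A -> bd F A != 0.
Proof. by move=> H; apply/eqP => E; have := bd_in F H; rewrite E ffunE eqxx. Qed.

Lemma dim_b0 : \dim (bounds0 F (set0 : {set {set 'I_3}})) = 0%N.
Proof. by rewrite /bounds0 enum_set0 span_nil dimv0. Qed.

Lemma dim_b1 : \dim (bounds0 F [set E01]) = 1%N.
Proof.
by rewrite /bounds0 enum_set1 span_seq1 dim_vline (bd_neq0 (v := o0)) // !inE eqxx.
Qed.

Lemma dim_b2 : \dim (bounds0 F [set E01; E12]) = 2%N.
Proof.
have -> : bounds0 F [set E01; E12] = <<[:: bd F E01; bd F E12]>>%VS.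
  apply: eq_span => z; apply/mapP/idP.
  - by case=> A; rewrite mem_enum !inE => /orP [] /eqP -> ->; rewrite eqxx ?orbT.
  - rewrite !inE => /orP [] /eqP ->; [exists E01 | exists E12] => //;
      rewrite mem_enum !inE eqxx ?orbT //.
rewrite dim_free // free_cons seq1_free (bd_neq0 (v := o1)) ?andbT; last by rewrite !inE eqxx ?orbT.
apply/negP => Hin.
have H0 := span_phi (phi := fun x : C0 'I_3 F => x o0) (@ev_add F _ o0) (@ev_scale F _ o0) _ Hin.
have : bd F E01 o0 = 0.
  apply: H0 => x; rewrite inE => /eqP ->; apply: bd_out; by rewrite !inE.
by apply/eqP; apply: bd_in; rewrite !inE eqxx.
Qed.

Lemma boundary_lin : linear (boundary pe (F:=F)).
Proof.
move=> k x y; rewrite /boundary scaler_sumr -big_split; apply: eq_bigr => A _.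
by rewrite !ffunE scalerDl scalerA.
Qed.

HB.instance Definition _ := GRing.isLinear.Build F (C1 'I_3 F) (C0 'I_3 F) _
  (boundary pe (F:=F)) boundary_lin.

Lemma chi1E (A B : {set 'I_3}) : chi1 F A B = if B == A then 1 else 0.
Proof. by rewrite ffunE; case: eqP. Qed.

Lemma cycles1_0 (ES : {set {set 'I_3}}) : (forall A, A \in ES -> is_edge pe A) ->
  \dim (cycles1 pe F ES) = 0%N.
Proof.
move=> HE; apply/eqP; rewrite dimv_eq0; apply/eqP.
apply/eqP; rewrite -subv0; apply/subvP => x; rewrite memv_cap memv0 memv_ker.
rewrite lfunE /= => /andP [H1 /eqP H2].
have Hout : forall B, B \notin ES -> x B = 0.
  move=> B HB.
  apply: (span_phi (phi := fun x : C1 'I_3 F => x B) (@ev1_add F _ B) (@ev1_scale F _ B) _ H1).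
  move=> y /mapP [A HA ->]; rewrite chi1E; case: eqP => // EBA.
  by move: HA; rewrite mem_enum -EBA (negbTE HB).
have Hb : boundary pe x = x E01 *: bd F E01 + x E12 *: bd F E12.
  rewrite /boundary (bigD1 E01) ?inE ?edge_E01 //= (bigD1 E12) /=; last first.
    by rewrite inE edge_E12 eq_sym E01_neq_E12.
  rewrite big1 ?addr0 // => A /andP [/andP [HA H01] H12].
  rewrite inE in HA; by case/edge_cases: HA H01 H12 => ->; rewrite eqxx ?andbF.
have Hx01 : x E01 = 0.
  have E : boundary pe x o0 = 0 by rewrite H2 ffunE.
  move: E; rewrite Hb ev_add !ev_scale (@bd_out F _ E12 o0) ?inE // mulr0 addr0 => /eqP.
  rewrite mulf_eq0 => /orP [/eqP //|]; rewrite (negbTE (bd_in _ _)) // !inE eqxx ?orbT //.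
have Hx12 : x E12 = 0.
  have E : boundary pe x o2 = 0 by rewrite H2 ffunE.
  move: E; rewrite Hb ev_add !ev_scale (@bd_out F _ E01 o2) ?inE // mulr0 add0r => /eqP.
  rewrite mulf_eq0 => /orP [/eqP //|]; rewrite (negbTE (bd_in _ _)) // !inE eqxx ?orbT //.
apply/eqP/ffunP => B; rewrite [RHS]ffunE.
case: (boolP (B \in ES)) => HB; last exact: Hout.
by case/edge_cases: (HE B HB) => ->.
Qed.

End C.

Local Open Scope ring_scope.

Lemma ne_E01 A : ~~ is_edge pe A -> (A == E01) = false.
Proof. by apply: contraNF => /eqP ->; exact: edge_E01. Qed.
Lemma ne_E12 A : ~~ is_edge pe A -> (A == E12) = false.
Proof. by apply: contraNF => /eqP ->; exact: edge_E12. Qed.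
Lemma E12_E01 : (E12 == E01) = false.
Proof. by rewrite eq_sym (negbTE E01_neq_E12). Qed.

Lemma ord3_ind (P : 'I_3 -> Prop) : P o0 -> P o1 -> P o2 -> forall x, P x.
Proof. by move=> H0 H1 H2 x; case: (ord3P x) => [->|[->|->]]. Qed.

Lemma set3_ind (P : {set 'I_3} -> Prop) : P E01 -> P E12 ->
  (forall A, ~~ is_edge pe A -> P A) -> forall A, P A.
Proof.
move=> H1 H2 H3 A; case: (boolP (is_edge pe A)) => [/edge_cases [->|->] //|]; exact: H3.
Qed.

Section L.
Variable R : realFieldType.

Lemma filtA1 : filt pe (fA R) 1 = ([set o0], set0).
Proof. rewrite /filt crit_fA /=; congr (_, _); [apply/setP => v; rewrite !inE /fA fv_le_nat; case: (ord3P v) => [->|[->|->]] // | apply/setP => A; rewrite !inE /fA fv_le_nat;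
  case: (boolP (is_edge pe A)) => [/edge_cases [->|->]|HA]; rewrite ?hh_E01 ?hh_E12 /=;
  rewrite ?hh_E01 ?hh_E12 ?eqxx ?E12_E01 ?(negbTE E01_neq_E12) ?edge_E01 ?edge_E12
     ?(ne_E01 HA) ?(ne_E12 HA) ?(negbTE HA) //]. Qed.
Lemma filtA2 : filt pe (fA R) 2 = (setT, [set E01]).
Proof. rewrite /filt crit_fA /=; congr (_, _); [apply/setP => v; rewrite !inE /fA fv_le_nat; case: (ord3P v) => [->|[->|->]] // | apply/setP => A; rewrite !inE /fA fv_le_nat;
  case: (boolP (is_edge pe A)) => [/edge_cases [->|->]|HA]; rewrite ?hh_E01 ?hh_E12 /=;
  rewrite ?hh_E01 ?hh_E12 ?eqxx ?E12_E01 ?(negbTE E01_neq_E12) ?edge_E01 ?edge_E12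
     ?(ne_E01 HA) ?(ne_E12 HA) ?(negbTE HA) //]. Qed.
Lemma filtA3 : filt pe (fA R) 3 = (setT, [set E01; E12]).
Proof. rewrite /filt crit_fA /=; congr (_, _); [apply/setP => v; rewrite !inE /fA fv_le_nat; case: (ord3P v) => [->|[->|->]] // | apply/setP => A; rewrite !inE /fA fv_le_nat;
  case: (boolP (is_edge pe A)) => [/edge_cases [->|->]|HA]; rewrite ?hh_E01 ?hh_E12 /=;
  rewrite ?hh_E01 ?hh_E12 ?eqxx ?E12_E01 ?(negbTE E01_neq_E12) ?edge_E01 ?edge_E12
     ?(ne_E01 HA) ?(ne_E12 HA) ?(negbTE HA) //]. Qed.
Lemma filtB1 : filt pe (gB R) 1 = ([set o0], set0).
Proof. rewrite /filt crit_gB /=; congr (_, _); [apply/setP => v; rewrite !inE /gB fv_le_nat; case: (ord3P v) => [->|[->|->]] // | apply/setP => A; rewrite !inE /gB fv_le_nat;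
  case: (boolP (is_edge pe A)) => [/edge_cases [->|->]|HA]; rewrite ?hh_E01 ?hh_E12 /=;
  rewrite ?hh_E01 ?hh_E12 ?eqxx ?E12_E01 ?(negbTE E01_neq_E12) ?edge_E01 ?edge_E12
     ?(ne_E01 HA) ?(ne_E12 HA) ?(negbTE HA) //]. Qed.
Lemma filtB2 : filt pe (gB R) 2 = (setT, [set E01]).
Proof. rewrite /filt crit_gB /=; congr (_, _); [apply/setP => v; rewrite !inE /gB fv_le_nat; case: (ord3P v) => [->|[->|->]] // | apply/setP => A; rewrite !inE /gB fv_le_nat;
  case: (boolP (is_edge pe A)) => [/edge_cases [->|->]|HA]; rewrite ?hh_E01 ?hh_E12 /=;
  rewrite ?hh_E01 ?hh_E12 ?eqxx ?E12_E01 ?(negbTE E01_neq_E12) ?edge_E01 ?edge_E12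
     ?(ne_E01 HA) ?(ne_E12 HA) ?(negbTE HA) //]. Qed.
Lemma filtB3 : filt pe (gB R) 3 = (setT, [set E01; E12]).
Proof. rewrite /filt crit_gB /=; congr (_, _); [apply/setP => v; rewrite !inE /gB fv_le_nat; case: (ord3P v) => [->|[->|->]] // | apply/setP => A; rewrite !inE /gB fv_le_nat;
  case: (boolP (is_edge pe A)) => [/edge_cases [->|->]|HA]; rewrite ?hh_E01 ?hh_E12 /=;
  rewrite ?hh_E01 ?hh_E12 ?eqxx ?E12_E01 ?(negbTE E01_neq_E12) ?edge_E01 ?edge_E12
     ?(ne_E01 HA) ?(ne_E12 HA) ?(negbTE HA) //]. Qed.
Lemma filtC1 : filt pe (gC R) 1 = ([set o0], set0).
Proof. rewrite /filt crit_gC /=; congr (_, _); [apply/setP => v; rewrite !inE /gC fv_le_nat; case: (ord3P v) => [->|[->|->]] // | apply/setP => A; rewrite !inE /gC fv_le_nat;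
  case: (boolP (is_edge pe A)) => [/edge_cases [->|->]|HA]; rewrite ?hh_E01 ?hh_E12 /=;
  rewrite ?hh_E01 ?hh_E12 ?eqxx ?E12_E01 ?(negbTE E01_neq_E12) ?edge_E01 ?edge_E12
     ?(ne_E01 HA) ?(ne_E12 HA) ?(negbTE HA) //]. Qed.
Lemma filtC2 : filt pe (gC R) 2 = ([set o0; o1], set0).
Proof. rewrite /filt crit_gC /=; congr (_, _); [apply/setP => v; rewrite !inE /gC fv_le_nat; case: (ord3P v) => [->|[->|->]] // | apply/setP => A; rewrite !inE /gC fv_le_nat;
  case: (boolP (is_edge pe A)) => [/edge_cases [->|->]|HA]; rewrite ?hh_E01 ?hh_E12 /=;
  rewrite ?hh_E01 ?hh_E12 ?eqxx ?E12_E01 ?(negbTE E01_neq_E12) ?edge_E01 ?edge_E12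
     ?(ne_E01 HA) ?(ne_E12 HA) ?(negbTE HA) //]. Qed.
Lemma filtC3 : filt pe (gC R) 3 = ([set o0; o1], [set E01]).
Proof. rewrite /filt crit_gC /=; congr (_, _); [apply/setP => v; rewrite !inE /gC fv_le_nat; case: (ord3P v) => [->|[->|->]] // | apply/setP => A; rewrite !inE /gC fv_le_nat;
  case: (boolP (is_edge pe A)) => [/edge_cases [->|->]|HA]; rewrite ?hh_E01 ?hh_E12 /=;
  rewrite ?hh_E01 ?hh_E12 ?eqxx ?E12_E01 ?(negbTE E01_neq_E12) ?edge_E01 ?edge_E12
     ?(ne_E01 HA) ?(ne_E12 HA) ?(negbTE HA) //]. Qed.
End L.

Local Open Scope ring_scope.

Section P.
Variable R : realFieldType.
Variable F : fieldType.

Lemma edg0 : forall A : {set 'I_3}, A \in (set0 : {set {set 'I_3}}) -> is_edge pe A.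
Proof. by move=> A; rewrite inE. Qed.
Lemma edg1 : forall A, A \in [set E01] -> is_edge pe A.
Proof. by move=> A; rewrite inE => /eqP ->; exact: edge_E01. Qed.
Lemma edg2 : forall A, A \in [set E01; E12] -> is_edge pe A.
Proof. by move=> A; rewrite !inE => /orP [] /eqP ->; [exact: edge_E01 | exact: edge_E12]. Qed.
Lemma sub0 : forall A : {set 'I_3}, A \in (set0 : {set {set 'I_3}}) -> A \subset [set o0; o1].
Proof. by move=> A; rewrite inE. Qed.
Lemma sub1 : forall A, A \in [set E01] -> A \subset [set o0; o1].
Proof. by move=> A; rewrite inE => /eqP ->. Qed.

Lemma pb0_set0 K2 L : pbetti pe F 0 (set0, K2) L = 0%N.
Proof. by rewrite /pbetti /= dim_chains0 cards0. Qed.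

Lemma pb0_o0 K2 S (E : {set {set 'I_3}}) : (forall A, A \in E -> is_edge pe A) ->
  pbetti pe F 0 ([set o0], K2) (S, E) = 1%N.
Proof.
move=> HE; rewrite /pbetti /= dim_chains0 cards1 cap_single ?dimv0 //.
exact: pairs_edges.
Qed.

Lemma pb0_T K2 S (E : {set {set 'I_3}}) : pbetti pe F 0 (setT, K2) (S, E) = (3 - \dim (bounds0 F E))%N.
Proof.
rewrite /pbetti /= dim_chains0 cardsT card_ord.
by rewrite (capv_idPr (bounds0_sub _ _)) // => A _; apply: subsetT.
Qed.

Lemma pb0_01 K2 S (E : {set {set 'I_3}}) : (forall A, A \in E -> A \subset [set o0; o1]) ->
  pbetti pe F 0 ([set o0; o1], K2) (S, E) = (2 - \dim (bounds0 F E))%N.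
Proof.
move=> H; rewrite /pbetti /= dim_chains0 cards2.
by rewrite (capv_idPr (bounds0_sub _ H)).
Qed.

Lemma filt_edges (f : S3 -> R) i A : A \in (filt pe f i).2 -> is_edge pe A.
Proof. by case: i => [|k] /=; rewrite inE // => /andP []. Qed.

Lemma pb1 (f : S3 -> R) i L : pbetti pe F 1 (filt pe f i) L = 0%N.
Proof. by rewrite /pbetti cycles1_0 //; apply: filt_edges. Qed.

Lemma filt0 (f : S3 -> R) : filt pe f 0 = (set0, set0).
Proof. by []. Qed.

Lemma pbAC p i j : (i <= j)%N -> (j <= 3)%N -> pb pe F (fA R) p i j = pb pe F (gC R) p i j.
Proof.
rewrite /pb; case: p => [|[|p]] //; last by rewrite !pb1.
case: i => [|[|[|[|i]]]]; case: j => [|[|[|[|j]]]] // _ _;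
rewrite ?filt0 ?filtA1 ?filtA2 ?filtA3 ?filtC1 ?filtC2 ?filtC3 ?pb0_set0
  ?(pb0_o0 _ _ edg0) ?(pb0_o0 _ _ edg1) ?(pb0_o0 _ _ edg2) ?pb0_T
  ?(pb0_01 _ _ sub0) ?(pb0_01 _ _ sub1) ?dim_b0 ?dim_b1 ?dim_b2 //.
Qed.


Lemma multAC p i j : (i < j)%N -> (j < 3)%N -> mult pe F (fA R) p i j = mult pe F (gC R) p i j.
Proof. by move=> H1 H2; rewrite /mult !pbAC //; lia. Qed.

Lemma multinfAC p i : (i < 3)%N -> mult_inf pe F (fA R) p i = mult_inf pe F (gC R) p i.
Proof. by move=> H; rewrite /mult_inf crit_fA crit_gC /= !pbAC //; lia. Qed.

Lemma persAC : persistence_equiv pe F (fA R) (gC R).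
Proof.
move=> p b d; rewrite /pdiagram crit_fA crit_gC; congr (_ + _).
- apply: eq_bigr => i _; apply: eq_bigr => j Hij; by rewrite multAC.
- by apply: eq_bigr => i _; rewrite multinfAC.
Qed.

Lemma pbA0_22 : pb pe F (fA R) 0 2 2 = 2%:Z.
Proof. by rewrite /pb filtA2 pb0_T dim_b1. Qed.
Lemma pbA0_23 : pb pe F (fA R) 0 2 3 = 1%:Z.
Proof. by rewrite /pb filtA2 filtA3 pb0_T dim_b2. Qed.
Lemma pbA0_12 : pb pe F (fA R) 0 1 2 = 1%:Z.
Proof. by rewrite /pb filtA1 filtA2 (pb0_o0 _ _ edg1). Qed.
Lemma pbA0_13 : pb pe F (fA R) 0 1 3 = 1%:Z.
Proof. by rewrite /pb filtA1 filtA3 (pb0_o0 _ _ edg2). Qed.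

Lemma notpersAB : ~ persistence_equiv pe F (fA R) (gB R).
Proof.
move/(_ 0%N 1%:R (Some 2%:R)); rewrite /pdiagram crit_fA crit_gB /=.
rewrite !big_ord_recl !big_ord0 /= !eqr_nat /=.
rewrite !big_mkcond !big_ord_recl !big_ord0 /=.
rewrite !big1_eq !add0r !addr0.
rewrite big_mkcond !big_ord_recl big_ord0 /=.
rewrite eqxx.
have E : forall x y : R, (Some x == Some y) = (x == y) by [].
rewrite /bump /= !addn0 add1n.
rewrite [X in _ = X]big1 => [|j _]; last first.
  by rewrite E; case: j => [[|[|[|?]]] ?] //=; rewrite eqr_nat.
rewrite /mult pbA0_22 pbA0_23 pbA0_12 pbA0_13.
by move/eqP.
Qed.

Lemma iso_refl (S : {set 'I_3}) (E : {set {set 'I_3}}) : subgraph_iso S E S E.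
Proof.
exists id; split; first by move=> x y _ _.
- exact: imset_id.
- by under eq_imset => A do rewrite imset_id; exact: imset_id.
Qed.

Lemma geAB : graph_equiv pe (fA R) (gB R).
Proof.
split; first by rewrite crit_fA crit_gB.
move=> i; rewrite crit_fA => Hi.
have : subgraph_iso (filt pe (fA R) i.+1).1 (filt pe (fA R) i.+1).2
                    (filt pe (gB R) i.+1).1 (filt pe (gB R) i.+1).2.
  by case: i Hi => [|[|[|i]]] // _; rewrite ?filtA1 ?filtA2 ?filtA3 ?filtB1 ?filtB2 ?filtB3;
    apply: iso_refl.
by rewrite /filt crit_fA.
Qed.

Lemma notgeAC : ~ graph_equiv pe (fA R) (gC R).
Proof.
case=> _ H; have [|h [Hinj HV _]] := H 1%N; first by rewrite crit_fA.
have HV' : h @: (filt pe (fA R) 2).1 = (filt pe (gC R) 2).1 := HV.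
have Hinj' : {in (filt pe (fA R) 2).1 &, injective h} := Hinj.
rewrite filtA2 filtC2 /= in HV' Hinj'.
have := card_in_imset Hinj'; rewrite HV' cardsT card_ord cards2 //.
Qed.

End P.

End Helpers.
Import Helpers.
Unset Implicit Arguments.

Theorem mainTheorem10 :
  forall (R : realFieldType) (F : fieldType),
  exists (V : finType) (e : rel V),
    is_tree e /\
    (exists f g : V + {set V} -> R,
        [/\ discrete_morse e f, discrete_morse e g,
            graph_equiv e f g & ~ persistence_equiv e F f g]) /\
    (exists f g : V + {set V} -> R,
        [/\ discrete_morse e f, discrete_morse e g,
            persistence_equiv e F f g & ~ graph_equiv e f g]).
Proof.
move=> R F; exists ('I_3 : finType), pe; split; first exact: tree_pe.
split.
- exists (fA R), (gB R); split.
  + exact: morse_fA.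
  + exact: morse_gB.
  + exact: geAB.
  + exact: notpersAB.
- exists (fA R), (gC R); split.
  + exact: morse_fA.
  + exact: morse_gC.
  + exact: persAC.
  + exact: notgeAC.
Qed.
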